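(* Let $m\ge 2$ be an integer, and let $P_n\in\mathbb{R}^{m}$ and $P_n^k\in\mathbb{R}^{m}$ be arbitrary vectors (the latter a fixed linearization point), with components $P_{n,j}$ and $P^k_{n,j}$. For $i\in\{1,\dots,m\}$ define the softmax component $$R_{n,i}(P_n)=\frac{\exp(P_{n,i})}{\sum_{j=1}^{m}\exp(P_{n,j})},$$ and the log-sum-exp function $\mathrm{LSE}(P_n)=\ln\Bigl(\sum_{j=1}^{m}\exp(P_{n,j})\Bigr)$. Let $\exp(P_n^k)$ denote the vector with components $\exp(P^k_{n,j})$, and define $$\underline{R}_{n,i}(P_n)=1-\sum_{j\neq i}^{m}\exp(P_{n,j})\,\exp\Bigl\{-\mathrm{LSE}(P_n^k)-\Bigl[\frac{\exp(P_n^k)}{\sum_{j=1}^{m}\exp(P^k_{n,j})}\Bigr]^{\top}(P_n-P_n^k)\Bigr\}.$$ Then for all $P_n\in\mathbb{R}^{m}$ we have $R_{n,i}(P_n)\ge \underline{R}_{n,i}(P_n)$, and moreover $\underline{R}_{n,i}$ is a concave function of $P_n$.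
   Context: Here $P_n$ plays the role of the $n$th row of a matrix $P\in\mathbb{R}^{m\times m}$ to which the softmax function is applied row-wise, and $P_n^k$ is the corresponding row of a fixed matrix $P^k$ (a linearization point). The sum $\sum_{j\neq i}^{m}$ means the sum over $j\in\{1,\dots,m\}\setminus\{i\}$. *)

(* Defs.v *)
From HB Require Import structures.
From mathcomp Require Import all_boot all_order all_algebra.
From mathcomp Require Import all_classical all_reals all_analysis.
Set Implicit Arguments. Unset Strict Implicit. Unset Printing Implicit Defensive.
Import Order.TTheory GRing.Theory Num.Theory.
Local Open Scope ring_scope.

Section Softmax.
Variables (R : realType) (m : nat).

Definition softmax (P : 'rV[R]_m) (i : 'I_m) : R :=
  expR (P 0 i) / \sum_(j < m) expR (P 0 j).

Definition LSE (P : 'rV[R]_m) : R := ln (\sum_(j < m) expR (P 0 j)).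

Definition softmax_lb (Pk P : 'rV[R]_m) (i : 'I_m) : R :=
  1 - \sum_(j < m | j != i)
        expR (P 0 j) *
        expR (- LSE Pk - \sum_(l < m) softmax Pk l * (P 0 l - Pk 0 l)).

End Softmax.

Definition concave_fun (R : realType) (m : nat) (f : 'rV[R]_m -> R) : Prop :=
  forall (x y : 'rV[R]_m) (t : R), 0 <= t -> t <= 1 ->
    t * f x + (1 - t) * f y <= f (t *: x + (1 - t) *: y).

(* Main.v *)
Require Import Defs.
From HB Require Import structures.
From mathcomp Require Import all_boot all_order all_algebra.
From mathcomp Require Import all_classical all_reals all_analysis.
From mathcomp Require Import ring lra.
Import Order.TTheory GRing.Theory Num.Theory.
Local Open Scope ring_scope.

Lemma expR_cvx (R : realType) (a b t : R) : 0 <= t -> t <= 1 ->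
  expR (t * a + (1 - t) * b) <= t * expR a + (1 - t) * expR b.
Proof.
move=> t0 t1; set z := t * a + (1 - t) * b.
have ha : expR z * (1 + (a - z)) <= expR a.
  have -> : expR a = expR z * expR (a - z) by rewrite -expRD addrC subrK.
  by rewrite ler_wpM2l ?expR_ge0 // expR_ge1Dx.
have hb : expR z * (1 + (b - z)) <= expR b.
  have -> : expR b = expR z * expR (b - z) by rewrite -expRD addrC subrK.
  by rewrite ler_wpM2l ?expR_ge0 // expR_ge1Dx.
have e : expR z = t * (expR z * (1 + (a - z))) + (1 - t) * (expR z * (1 + (b - z))).
  rewrite /z; ring.
rewrite [leLHS]e; apply: lerD; apply: ler_wpM2l => //; lra.
Qed.

Lemma sum_sm (R : realType) (m : nat) (Pk : 'rV[R]_m) :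
  (0 < m)%N -> \sum_(l < m) softmax Pk l = 1.
Proof.
move=> m0; rewrite /softmax -mulr_suml divff //.
have [l _] : exists l : 'I_m, true by exists (Ordinal m0).
rewrite (bigD1 l) //= lt0r_neq0 // ltr_pwDl ?expR_gt0 // sumr_ge0 // => j _.
Qed.

Theorem lemma1 (R : realType) (m : nat) (hm : (2 <= m)%N)
  (Pk : 'rV[R]_m) (i : 'I_m) :
  (forall P : 'rV[R]_m, softmax_lb Pk P i <= softmax P i) /\
  concave_fun (fun P : 'rV[R]_m => softmax_lb Pk P i).
Proof.
have m0 : (0 < m)%N by apply: leq_trans hm.
have hS : forall P : 'rV[R]_m, 0 < \sum_(j < m) expR (P 0 j).
  move=> P; rewrite (bigD1 i) //= ltr_pwDl ?expR_gt0 // sumr_ge0 // => j _.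
split.
- move=> P.
  set S := \sum_(j < m) expR (P 0 j).
  set Sk := \sum_(j < m) expR (Pk 0 j).
  set c := \sum_(l < m) softmax Pk l * (P 0 l - Pk 0 l).
  have Spos : 0 < S by exact: hS.
  have Skpos : 0 < Sk by exact: hS.
  have key : Sk <= S * expR (- c).
    have e : S * expR (- c) / Sk =
        \sum_(l < m) softmax Pk l * expR ((P 0 l - Pk 0 l) - c).
      rewrite /S mulr_suml mulr_suml; apply: eq_bigr => l _.
      rewrite /softmax expRD -/Sk.
      have -> : expR (P 0 l) = expR (Pk 0 l) * expR (P 0 l - Pk 0 l).
        by rewrite -expRD addrC subrK.
      field; exact: lt0r_neq0.
    have : 1 <= S * expR (- c) / Sk.
      rewrite e -(@sum_sm R m Pk m0).
      have -> : \sum_(l < m) softmax Pk l =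
          \sum_(l < m) softmax Pk l * (1 + ((P 0 l - Pk 0 l) - c)).
        have h0 : \sum_(l < m) softmax Pk l * ((P 0 l - Pk 0 l) - c) = 0.
          under eq_bigr => l _ do rewrite mulrBr.
          by rewrite sumrB -mulr_suml sum_sm // mul1r -/c subrr.
        by rewrite -[LHS]addr0 -[X in _ + X]h0 -big_split /=; apply: eq_bigr => l _; ring.
      apply: ler_sum => l _; apply: ler_wpM2l; last exact: expR_ge1Dx.
      by rewrite /softmax divr_ge0 ?expR_ge0 ?ltW.
    by rewrite ler_pdivlMr // mul1r.
  have E : expR (- LSE Pk - c) = Sk^-1 * expR (- c).
    by rewrite expRD expRN /LSE lnK // posrE.
  rewrite /softmax_lb E -/c.
  have -> : softmax P i = 1 - \sum_(j < m | j != i) expR (P 0 j) * S^-1.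
    rewrite /softmax -/S -mulr_suml.
    have : S = expR (P 0 i) + \sum_(j < m | j != i) expR (P 0 j) by rewrite /S (bigD1 i).
    move=> HS; have S0 : S != 0 by exact: lt0r_neq0.
    move: S0; rewrite HS; move: (\sum_(j < m | j != i) expR (P 0 j)) => T S0.
    by field.
  apply: lerB (lexx 1) _; apply: ler_sum => j _; apply: ler_wpM2l; first exact: expR_ge0.
  rewrite -subr_ge0.
  have -> : Sk^-1 * expR (- c) - S^-1 = (S * expR (- c) - Sk) / (S * Sk).
    by field; apply/andP; split; exact: lt0r_neq0.
  by rewrite divr_ge0 ?subr_ge0 // mulr_ge0 // ltW.
- move=> x y t t0 t1 /=.
  rewrite /softmax_lb.
  set g := fun (P : 'rV[R]_m) (j : 'I_m) =>
    P 0 j - LSE Pk - \sum_(l < m) softmax Pk l * (P 0 l - Pk 0 l).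
  have eg : forall (P : 'rV[R]_m) (j : 'I_m), expR (P 0 j) *
      expR (- LSE Pk - \sum_(l < m) softmax Pk l * (P 0 l - Pk 0 l)) = expR (g P j).
    by move=> P j; rewrite -expRD /g; congr expR; ring.
  under eq_bigr => j _ do rewrite eg.
  under [X in _ + (_ * (1 - X)) <= _]eq_bigr => j _ do rewrite eg.
  under [X in _ <= 1 - X]eq_bigr => j _ do rewrite eg.
  have lin : forall j, g (t *: x + (1 - t) *: y) j = t * g x j + (1 - t) * g y j.
    move=> j; rewrite /g !mxE.
    have -> : \sum_(l < m) softmax Pk l * ((t *: x + (1 - t) *: y) 0 l - Pk 0 l)
      = t * \sum_(l < m) softmax Pk l * (x 0 l - Pk 0 l)
        + (1 - t) * \sum_(l < m) softmax Pk l * (y 0 l - Pk 0 l).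
      rewrite !mulr_sumr -big_split /=; apply: eq_bigr => l _; rewrite !mxE; ring.
    ring.
  have H : \sum_(j < m | j != i) expR (g (t *: x + (1 - t) *: y) j) <=
    t * \sum_(j < m | j != i) expR (g x j) + (1 - t) * \sum_(j < m | j != i) expR (g y j).
    rewrite !mulr_sumr -big_split /=; apply: ler_sum => j _; rewrite lin.
    exact: expR_cvx.
  lra.
Qed.
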